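(* For every prime power $q\ge 5$, $\chi_D(LG_q)=3$.
   Context: Let $\mathbb{F}_q$ be the field with $q$ elements and $V=\mathbb{F}_q^3$. Let $\mathcal{P}$ be the set of $1$-dimensional subspaces (''points'') and $\mathcal{L}$ the set of $2$-dimensional subspaces (''lines'') of $V$. The Levi graph $LG_q$ is the bipartite graph with vertex set $\mathcal{P}\sqcup\mathcal{L}$ in which a point $p$ is adjacent to a line $l$ iff $p\subset l$. A coloring is distinguishing if the only graph automorphism mapping every color class onto itself is the identity; $\chi_D(G)$ is the minimum number of colors of a proper distinguishing coloring of $G$. *)

(* Defs.v *)
From HB Require Import structures.
From mathcomp Require Import all_boot all_order all_algebra all_fingroup all_field.
Set Implicit Arguments. Unset Strict Implicit. Unset Printing Implicit Defensive.
Import GRing.Theory.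
Local Open Scope ring_scope.

(** Subspaces of V = F^3 (row vectors) are represented canonically by their
    row-space matrix <<A>>%MS (mxalgebra's canonical representative). *)

Definition pg_point (F : finFieldType) : finType :=
  {A : 'M[F]_3 | (<<A>>%MS == A) && (\rank A == 1)%N}.

Definition pg_line (F : finFieldType) : finType :=
  {A : 'M[F]_3 | (<<A>>%MS == A) && (\rank A == 2)%N}.

Definition LG_vertex (F : finFieldType) : finType := (pg_point F + pg_line F)%type.

Definition LG_adj (F : finFieldType) : rel (LG_vertex F) :=
  fun x y =>
    match x, y with
    | inl p, inr l => (val p <= val l)%MS
    | inr l, inl p => (val p <= val l)%MS
    | _, _ => false
    end.

Definition graph_aut (V : finType) (adj : rel V) (f : {perm V}) : Prop :=
  forall x y, adj (f x) (f y) = adj x y.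

Definition proper_coloring (V : finType) (adj : rel V) (k : nat) (c : V -> 'I_k) : Prop :=
  forall x y, adj x y -> c x != c y.

Definition distinguishing (V : finType) (adj : rel V) (k : nat) (c : V -> 'I_k) : Prop :=
  forall f : {perm V}, graph_aut adj f -> (forall x, c (f x) = c x) -> f = 1%g.

Definition has_proper_dist_coloring (V : finType) (adj : rel V) (k : nat) : Prop :=
  exists c : V -> 'I_k, proper_coloring adj c /\ distinguishing adj c.

Definition chiD_eq (V : finType) (adj : rel V) (k : nat) : Prop :=
  has_proper_dist_coloring adj k /\
  forall m, has_proper_dist_coloring adj m -> (k <= m)%N.

(* Main.v *)
Require Import Defs.
From HB Require Import structures.
From mathcomp Require Import all_boot all_order all_algebra all_fingroup all_field all_solvable.
From mathcomp Require Import ring.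
Set Implicit Arguments. Unset Strict Implicit. Unset Printing Implicit Defensive.
Import GRing.Theory.

Section Gen.
Local Open Scope ring_scope.
Variable F : finFieldType.

Lemma gen_exists : exists w : F, forall t : F, t != 0 -> exists k, t = w ^+ k.
Proof.
have /cyclicP [u Hu] := field_unit_group_cyclic [set: {unit F}]%G.
exists (FinRing.uval u) => t tn0.
have tu : t \is a GRing.unit by rewrite unitfE.
have : FinRing.Unit tu \in <[u]>%g by rewrite -Hu inE.
case/cycleP => k Hk; exists k.
by have := congr1 FinRing.uval Hk; rewrite FinRing.val_unitX.
Qed.
End Gen.

Section Geo.
Local Open Scope ring_scope.
Variable F : finFieldType.
Notation pt := (pg_point F).
Notation ln := (pg_line F).

Lemma ptE (p : pt) : (<<val p>> = val p)%MS.
Proof. by case: p => A /= /andP[/eqP]. Qed.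
Lemma ptR (p : pt) : \rank (val p) = 1%N.
Proof. by case: p => A /= /andP[_ /eqP]. Qed.
Lemma lnE (p : ln) : (<<val p>> = val p)%MS.
Proof. by case: p => A /= /andP[/eqP]. Qed.
Lemma lnR (p : ln) : \rank (val p) = 2%N.
Proof. by case: p => A /= /andP[_ /eqP]. Qed.

Lemma pt_eqmx (p q : pt) : (val p == val q)%MS -> p = q.
Proof. by move/genmxP => H; apply: val_inj; rewrite -ptE H ptE. Qed.
Lemma ln_eqmx (p q : ln) : (val p == val q)%MS -> p = q.
Proof. by move/genmxP => H; apply: val_inj; rewrite -lnE H lnE. Qed.

Lemma rank_add2 (p q : pt) : p != q -> (1 < \rank (val p + val q))%N.
Proof.
move=> npq; rewrite ltnNge; apply/negP => Hr.
have H1 : (val p == val p + val q)%MS.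
  have := mxrank_leqif_eq (addsmxSl (val p) (val q)).
  rewrite ptR => /leqifP; case: ifP => // _ Hlt.
  by move: (leq_ltn_trans Hr Hlt); rewrite ltnn.
have sqp : (val q <= val p)%MS.
  by rewrite (eqmxP H1) addsmxSr.
have := mxrank_leqif_eq sqp; rewrite !ptR => /leqifP; case: ifP => // Hq _.
by move: npq; rewrite (pt_eqmx Hq) eqxx.
Qed.

Lemma uniq_line (p q : pt) (L M : ln) : p != q ->
  (val p <= val L)%MS -> (val q <= val L)%MS ->
  (val p <= val M)%MS -> (val q <= val M)%MS -> L = M.
Proof.
move=> npq pL qL pM qM.
have r2 := rank_add2 npq.
have eqL : (val p + val q == val L)%MS.
  have sL : (val p + val q <= val L)%MS by rewrite addsmx_sub pL qL.
  have := mxrank_leqif_eq sL; rewrite lnR => /leqifP; case: ifP => // _ Hlt.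
  by move: (leq_ltn_trans r2 Hlt); rewrite ltnn.
have eqM : (val p + val q == val M)%MS.
  have sM : (val p + val q <= val M)%MS by rewrite addsmx_sub pM qM.
  have := mxrank_leqif_eq sM; rewrite lnR => /leqifP; case: ifP => // _ Hlt.
  by move: (leq_ltn_trans r2 Hlt); rewrite ltnn.
apply: ln_eqmx.
apply/eqmxP; exact: (eqmx_trans (eqmx_sym (eqmxP eqL)) (eqmxP eqM)).
Qed.

Definition vec3 (a b c : F) : 'rV[F]_3 := \row_(i < 3) nth 0 [:: a; b; c] i.
Definition dot3 (v n : 'rV[F]_3) := (v *m n^T) 0 0.
Lemma dot3E a b c d e f : dot3 (vec3 a b c) (vec3 d e f) = a*d + b*e + c*f.
Proof. by rewrite /dot3 !mxE !big_ord_recl big_ord0 !mxE /= addr0 addrA. Qed.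

Lemma vec3_eq0 a b c : (vec3 a b c == 0) = [&& a == 0, b == 0 & c == 0].
Proof.
apply/eqP/and3P => [H|[/eqP-> /eqP-> /eqP->]].
  have := congr1 (fun M : 'rV_3 => M 0 0) H; have := congr1 (fun M : 'rV_3 => M 0 1) H.
  have := congr1 (fun M : 'rV_3 => M 0 2%:R) H.
  by rewrite !mxE /= => -> -> ->.
by apply/rowP => i; rewrite !mxE; case: i => [[|[|[|i]]] Hi].
Qed.

Lemma vec3_scale k a b c : k *: vec3 a b c = vec3 (k*a) (k*b) (k*c).
Proof. by apply/rowP => i; rewrite !mxE; case: i => [[|[|[|i]]] Hi]. Qed.

Lemma ptv_proof (v : 'rV[F]_3) : v != 0 ->
  (<<<<v>>>>%MS == <<v>>%MS) && (\rank <<v>> == 1%N).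
Proof. by move=> H; rewrite genmx_id eqxx genmxE rank_rV H. Qed.

Lemma lnv_proof (n : 'rV[F]_3) : n != 0 ->
  (<<<<kermx n^T>>>>%MS == <<kermx n^T>>%MS) && (\rank <<kermx n^T>> == 2%N).
Proof. by move=> H; rewrite genmx_id eqxx genmxE mxrank_ker mxrank_tr rank_rV H. Qed.

Lemma v100 : vec3 1 0 0 != 0. Proof. by rewrite vec3_eq0 oner_eq0. Qed.
Definition p0 : pt := Sub <<vec3 1 0 0>>%MS (ptv_proof v100).
Definition l0 : ln := Sub <<kermx (vec3 1 0 0)^T>>%MS (lnv_proof v100).
Definition ptv (v : 'rV[F]_3) : pt := insubd p0 <<v>>%MS.
Definition lnv (n : 'rV[F]_3) : ln := insubd l0 <<kermx n^T>>%MS.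

Lemma val_ptv v : v != 0 -> val (ptv v) = <<v>>%MS.
Proof. by move=> H; rewrite val_insubd ptv_proof. Qed.
Lemma val_lnv n : n != 0 -> val (lnv n) = <<kermx n^T>>%MS.
Proof. by move=> H; rewrite val_insubd lnv_proof. Qed.

Lemma inc_vec v n : v != 0 -> n != 0 ->
  (val (ptv v) <= val (lnv n))%MS = (dot3 v n == 0).
Proof.
move=> Hv Hn; rewrite val_ptv // val_lnv // !genmxE sub_kermx /dot3.
apply/eqP/eqP => [->|H]; first by rewrite mxE.
by apply/matrixP => i j; rewrite !ord1 H mxE.
Qed.

Lemma ptv_eq v v' : v != 0 -> v' != 0 -> (v == v')%MS -> ptv v = ptv v'.
Proof. by move=> H H' /genmxP E; apply: val_inj; rewrite !val_ptv // E. Qed.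

Lemma ptv_scale k v : k != 0 -> v != 0 -> ptv (k *: v) = ptv v.
Proof.
move=> Hk Hv; apply: ptv_eq => //; first by rewrite scaler_eq0 negb_or Hk.
by apply/eqmxP; apply: eqmx_scale.
Qed.

Lemma pt_vec (p : pt) : exists2 v, v != 0 & p = ptv v.
Proof.
have nz : nz_row (val p) != 0.
  by rewrite nz_row_eq0 -mxrank_eq0 ptR.
exists (nz_row (val p)) => //; apply: val_inj; rewrite val_ptv //.
rewrite -{1}(ptE p); apply/genmxP; apply/eqmxP/eqmx_sym/eqmxP.
have := mxrank_leqif_eq (nz_row_sub (val p)); rewrite ptR rank_rV nz /=.
by move/leqifP; case: ifP.
Qed.


Lemma pt_nz (p : pt) : val p != 0.
Proof. by rewrite -mxrank_eq0 ptR. Qed.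
Lemma ln_nz (p : ln) : val p != 0.
Proof. by rewrite -mxrank_eq0 lnR. Qed.

Lemma ln_two_pts (L : ln) : exists p q : pt,
  [/\ p != q, (val p <= val L)%MS & (val q <= val L)%MS].
Proof.
have nz : nz_row (val L) != 0 by rewrite nz_row_eq0 ln_nz.
set p := ptv (nz_row (val L)).
have pL : (val p <= val L)%MS by rewrite val_ptv // genmxE nz_row_sub.
have [i Hi] : exists i, ~~ (row i (val L) <= val p)%MS.
  apply/row_subPn/negP => H; have := mxrankS H; rewrite lnR ptR.
  by [].
have nzi : row i (val L) != 0.
  by apply: contraNneq Hi => ->; rewrite sub0mx.
exists p, (ptv (row i (val L))); split => //.
  apply: contraNneq Hi => E; rewrite E val_ptv // genmxE.
  by [].
by rewrite val_ptv // genmxE row_sub.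
Qed.

Lemma meet_ex (L M : ln) : exists p : pt, (val p <= val L)%MS && (val p <= val M)%MS.
Proof.
set C := (val L :&: val M)%MS.
have nzC : C != 0.
  rewrite -mxrank_eq0; apply/eqP => H0.
  have := mxrank_sum_cap (val L) (val M); rewrite -/C H0 !lnR addn0.
  by move=> E; have := rank_leq_col (val L + val M)%MS; rewrite E.
have nz : nz_row C != 0 by rewrite nz_row_eq0.
exists (ptv (nz_row C)); rewrite val_ptv // !genmxE.
have sC := nz_row_sub C.
by rewrite (submx_trans sC (capmxSl _ _)) (submx_trans sC (capmxSr _ _)).
Qed.

Definition mkln (A : 'M[F]_3) : ln := insubd l0 <<A>>%MS.
Lemma val_mkln A : \rank A = 2%N -> val (mkln A) = <<A>>%MS.
Proof. by move=> H; rewrite val_insubd genmx_id eqxx genmxE H. Qed.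

Lemma join_ex (p q : pt) : exists L : ln, (val p <= val L)%MS && (val q <= val L)%MS.
Proof.
suff H : forall p q : pt, p != q ->
    exists L : ln, (val p <= val L)%MS && (val q <= val L)%MS.
  case: (eqVneq p q) => [<-|]; last exact: H.
  have v010 : vec3 0 1 0 != 0 by rewrite vec3_eq0 oner_eq0 eqxx.
  have n12 : ptv (vec3 1 0 0) != ptv (vec3 0 1 0).
    apply/negP => /eqP/(congr1 val); rewrite !val_ptv ?v100 // => /genmxP.
    rewrite /eqmx => /andP[+ _] => /submxP [D].
    move/(congr1 (fun M : 'rV_3 => M 0 0)); rewrite !mxE big_ord1 !mxE /=.
    by rewrite mulr0 => /eqP; rewrite oner_eq0.
  case: (eqVneq p (ptv (vec3 1 0 0))) => [Ep|np].
    have [L /andP[H1 H2]] := H _ _ n12; exists L; by rewrite Ep H1.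
  have [L /andP[H1 H2]] := H _ _ np; exists L; by rewrite H1.
move=> {}p {}q npq.
have r2 : \rank (val p + val q)%MS = 2%N.
  apply/eqP; rewrite eqn_leq rank_add2 // andbT.
  by have := mxrank_adds_leqif (val p) (val q); rewrite !ptR; case.
exists (mkln (val p + val q)%MS); rewrite val_mkln // !genmxE.
by rewrite addsmxSl addsmxSr.
Qed.

End Geo.

Section Col.
Local Open Scope ring_scope.
Variable F : finFieldType.
Variable w : F.
Hypothesis Hw0 : w != 0.
Hypothesis Hw1 : w != 1.
Notation pt := (pg_point F).
Notation ln := (pg_line F).
Notation vec3 := (@vec3 F).
Notation ptv := (@ptv F).
Notation lnv := (@lnv F).

Lemma vnz1 (a b c : F) : a != 0 -> vec3 a b c != 0.
Proof. by move=> H; rewrite vec3_eq0 (negbTE H). Qed.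
Lemma vnz2 (a b c : F) : b != 0 -> vec3 a b c != 0.
Proof. by move=> H; rewrite vec3_eq0 (negbTE H) andbF. Qed.
Lemma vnz3 (a b c : F) : c != 0 -> vec3 a b c != 0.
Proof. by move=> H; rewrite vec3_eq0 (negbTE H) !andbF. Qed.

Lemma m1nz : (-1 : F) != 0. Proof. by rewrite oppr_eq0 oner_eq0. Qed.

Ltac nzt := first [ apply: vnz3; by rewrite ?oner_eq0 ?m1nz ?Hw0
                  | apply: vnz1; by rewrite ?oner_eq0 ?m1nz ?Hw0
                  | apply: vnz2; by rewrite ?oner_eq0 ?m1nz ?Hw0 ].

Lemma incv a b c d e g : vec3 a b c != 0 -> vec3 d e g != 0 ->
  (val (ptv (vec3 a b c)) <= val (lnv (vec3 d e g)))%MS = (a*d + b*e + c*g == 0).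
Proof. by move=> H1 H2; rewrite inc_vec // dot3E. Qed.

Ltac inc := rewrite incv; [ | nzt | nzt ].

Definition pO := ptv (vec3 0 0 1).
Definition pU := ptv (vec3 1 0 0).
Definition pV := ptv (vec3 0 1 0).
Definition pX t := ptv (vec3 t 0 1).
Definition pc1 := ptv (vec3 1 1 1).
Definition pE := ptv (vec3 w w 1).
Definition pc2 := ptv (vec3 w 1 1).
Definition lLx := lnv (vec3 1 0 0).
Definition lB := lnv (vec3 0 1 0).
Definition lD := lnv (vec3 1 (-1) 0).
Definition lI := lnv (vec3 0 0 1).

Definition Spt (p : pt) : bool :=
  [&& ((val p <= val lLx)%MS || (val p <= val lB)%MS || (val p <= val lD)%MS),
      p != pO, ~~ (val p <= val lI)%MS, p != pX 1, p != pc1 & p != pE].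
Definition Mln (L : ln) : bool :=
  ((val pO <= val L)%MS && [&& L != lLx, L != lB & L != lD]) || (L == lI).

Definition k0 : 'I_3 := @Ordinal 3 0 isT.
Definition k1 : 'I_3 := @Ordinal 3 1 isT.
Definition k2 : 'I_3 := @Ordinal 3 2 isT.

Definition col (x : LG_vertex F) : 'I_3 :=
  match x with
  | inl p => if Spt p then k2 else k1
  | inr L => if Mln L then k2 else k0
  end.

Lemma OLx : (val pO <= val lLx)%MS. Proof. by inc; apply/eqP; ring. Qed.
Lemma OB : (val pO <= val lB)%MS. Proof. by inc; apply/eqP; ring. Qed.
Lemma OD : (val pO <= val lD)%MS. Proof. by inc; apply/eqP; ring. Qed.
Lemma OnI : ~~ (val pO <= val lI)%MS.
Proof. inc; have -> : (0 * 0 + 0 * 0 + 1 * 1 : F) = 1 by ring. by rewrite oner_eq0. Qed.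

Lemma proper_SM (p : pt) (L : ln) : Spt p -> Mln L -> ~~ (val p <= val L)%MS.
Proof.
case/and5P => HW HnO HnI _ _ /orP[/andP[OL /and3P[n1 n2 n3]]|/eqP->] //.
apply/negP => pL.
have key : forall W : ln, (val p <= val W)%MS -> (val pO <= val W)%MS -> L = W.
  by move=> W pW OW; apply: (uniq_line HnO pL OL pW OW).
case/orP: HW => [/orP[]|] H.
- by move: n1; rewrite (key _ H OLx) eqxx.
- by move: n2; rewrite (key _ H OB) eqxx.
- by move: n3; rewrite (key _ H OD) eqxx.
Qed.

Lemma col_proper : proper_coloring (@LG_adj F) col.
Proof.
move=> [p|L] [q|M] //= H.
- case: ifP => Sp; case: ifP => ML //.
  by move: (proper_SM Sp ML); rewrite H.
- case: ifP => SM; case: ifP => Mq //.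
  by move: (proper_SM Mq SM); rewrite H.
Qed.


Section Dist.
Variables (a1 a2 a3 : F).
Hypothesis Ha : [/\ a1 != 0, a2 != 0 & a3 != 0].
Hypothesis Hb : [/\ a1 != 1, a2 != 1 & a3 != 1].
Hypothesis Hc : [/\ a1 != a2, a1 != a3 & a2 != a3].
Hypothesis Hgen : forall t : F, t != 0 -> exists k, t = w ^+ k.

Variable f : {perm LG_vertex F}.
Hypothesis Haut : graph_aut (@LG_adj F) f.
Hypothesis Hcol : forall x, col (f x) = col x.

Lemma line_has_pt (L : ln) : exists p : pt, (val p <= val L)%MS.
Proof. by have [p /andP[H _]] := meet_ex L L; exists p. Qed.
Lemma pt_has_line (p : pt) : exists L : ln, (val p <= val L)%MS.
Proof. by have [L /andP[H _]] := join_ex p p; exists L. Qed.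

Lemma f_inl p : exists p', f (inl p) = inl p'.
Proof.
case E: (f (inl p)) => [p'|L']; first by exists p'.
exfalso; have := Hcol (inl p); rewrite E /=.
case: ifP => SL; case: ifP => Sp //.
have [L pL] := pt_has_line p.
have ML : Mln L = false.
  by apply: negbTE; apply: contraL pL => ML; apply: proper_SM.
have := Hcol (inr L); rewrite /= ML.
case E2: (f (inr L)) => [q|M] /=; first by case: ifP.
move=> _; have := Haut (inl p) (inr L); rewrite E E2 /=.
by rewrite pL.
Qed.

Lemma f_inr L : exists L', f (inr L) = inr L'.
Proof.
case E: (f (inr L)) => [p'|L']; last by exists L'.
exfalso; have := Hcol (inr L); rewrite E /=.
case: ifP => SL; case: ifP => Sp //.
have [p pL] := line_has_pt L.
have Mp : Spt p = false.
  by apply: negbTE; apply: contraL pL => Mp; apply: proper_SM.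
have := Hcol (inl p); rewrite /= Mp.
case E2: (f (inl p)) => [q|M] /=; last by case: ifP.
move=> _; have := Haut (inl p) (inr L); rewrite E E2 /=.
by rewrite pL.
Qed.

Definition fp (p : pt) : pt := if f (inl p) is inl p' then p' else p.
Definition fl (L : ln) : ln := if f (inr L) is inr L' then L' else L.

Lemma fpE p : f (inl p) = inl (fp p).
Proof. by rewrite /fp; case: (f_inl p) => p' ->. Qed.
Lemma flE L : f (inr L) = inr (fl L).
Proof. by rewrite /fl; case: (f_inr L) => L' ->. Qed.

Lemma finc p L : (val (fp p) <= val (fl L))%MS = (val p <= val L)%MS.
Proof. by have := Haut (inl p) (inr L); rewrite fpE flE. Qed.

Lemma fp_inj : injective fp.
Proof. by move=> p q E; have := @perm_inj _ f (inl p) (inl q); rewrite !fpE E => /(_ erefl) [] . Qed.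
Lemma fl_inj : injective fl.
Proof. by move=> p q E; have := @perm_inj _ f (inr p) (inr q); rewrite !flE E => /(_ erefl) [] . Qed.

Lemma Spt_f p : Spt (fp p) = Spt p.
Proof. by have := Hcol (inl p); rewrite fpE /=; do 2 case: ifP. Qed.
Lemma Mln_f L : Mln (fl L) = Mln L.
Proof. by have := Hcol (inr L); rewrite flE /=; do 2 case: ifP. Qed.

Lemma fix_line (p q : pt) (L : ln) : p != q -> fp p = p -> fp q = q ->
  (val p <= val L)%MS -> (val q <= val L)%MS -> fl L = L.
Proof.
move=> npq Hp Hq pL qL; apply: (uniq_line npq) => //.
- by rewrite -{1}Hp finc.
- by rewrite -{1}Hq finc.
Qed.

Lemma fix_pt (p : pt) (L M : ln) : L != M -> fl L = L -> fl M = M ->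
  (val p <= val L)%MS -> (val p <= val M)%MS -> fp p = p.
Proof.
move=> nLM HL HM pL pM; apply/eqP/negPn/negP => np.
move/negP: nLM; apply; apply/eqP; apply: (uniq_line np) => //.
- by rewrite -{1}HL finc.
- by rewrite -{1}HM finc.
Qed.


Lemma nz_eq (x y : F) : x = y -> y != 0 -> x != 0.
Proof. by move=> ->. Qed.
Lemma w1nz : w - 1 != 0. Proof. by rewrite subr_eq0. Qed.
Lemma nw1nz : 1 - w != 0. Proof. by rewrite subr_eq0 eq_sym. Qed.
Ltac nzc := by rewrite ?oner_eq0 ?m1nz ?Hw0 ?w1nz ?nw1nz.
Ltac ninc y := inc; apply: (@nz_eq _ y); [ring | nzc].
Ltac yinc := inc; apply/eqP; ring.

Lemma pneq (p q : pt) (L : ln) : (val p <= val L)%MS -> ~~ (val q <= val L)%MS -> p != q.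
Proof. by move=> H1 H2; apply: contraNneq H2 => <-. Qed.
Lemma pneq' (p q : pt) (L : ln) : (val q <= val L)%MS -> ~~ (val p <= val L)%MS -> p != q.
Proof. by move=> H1 H2; apply: contraNneq H2 => ->. Qed.
Lemma lneq (L M : ln) (p : pt) : (val p <= val L)%MS -> ~~ (val p <= val M)%MS -> L != M.
Proof. by move=> H1 H2; apply: contraNneq H2 => <-. Qed.

Lemma X1B : (val (pX 1) <= val lB)%MS. Proof. by yinc. Qed.
Lemma X1nLx : ~~ (val (pX 1) <= val lLx)%MS. Proof. by ninc (1:F). Qed.
Lemma X1nD : ~~ (val (pX 1) <= val lD)%MS. Proof. by ninc (1:F). Qed.
Lemma X1nI : ~~ (val (pX 1) <= val lI)%MS. Proof. by ninc (1:F). Qed.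
Lemma c1D : (val pc1 <= val lD)%MS. Proof. by yinc. Qed.
Lemma c1nLx : ~~ (val pc1 <= val lLx)%MS. Proof. by ninc (1:F). Qed.
Lemma c1nB : ~~ (val pc1 <= val lB)%MS. Proof. by ninc (1:F). Qed.
Lemma c1nI : ~~ (val pc1 <= val lI)%MS. Proof. by ninc (1:F). Qed.
Lemma ED : (val pE <= val lD)%MS. Proof. by yinc. Qed.
Lemma EnLx : ~~ (val pE <= val lLx)%MS. Proof. by ninc w. Qed.
Lemma EnB : ~~ (val pE <= val lB)%MS. Proof. by ninc w. Qed.
Lemma EnI : ~~ (val pE <= val lI)%MS. Proof. by ninc (1:F). Qed.


Definition Ma (a : F) := lnv (vec3 a (-1) 0).

Lemma OMa a : (val pO <= val (Ma a))%MS. Proof. by yinc. Qed.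
Lemma P1a a : (val (ptv (vec3 1 a 0)) <= val (Ma a))%MS. Proof. by yinc. Qed.

Lemma Ma_marked a : a != 0 -> a != 1 -> Mln (Ma a).
Proof.
move=> H0 H1; rewrite /Mln OMa /=; apply/orP; left; apply/and3P; split.
- apply: (lneq (P1a a)); ninc (1:F).
- apply: (lneq (P1a a)); inc; apply: (@nz_eq _ a); [ring | done].
- apply: (lneq (P1a a)); inc; apply: (@nz_eq _ (1 - a)); [ring | by rewrite subr_eq0 eq_sym].
Qed.

Lemma Ma_neq a b : a != b -> Ma a != Ma b.
Proof.
move=> H; apply: (lneq (P1a a)); inc; apply: (@nz_eq _ (b - a)); [ring | by rewrite subr_eq0 eq_sym].
Qed.

Lemma MaI a : Ma a != lI.
Proof. apply: (lneq (OMa a)); exact: OnI. Qed.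

Lemma two_marked (X : pt) (L1 L2 : ln) : L1 != L2 -> Mln L1 -> Mln L2 ->
  L1 != lI -> L2 != lI -> (val X <= val L1)%MS -> (val X <= val L2)%MS -> X = pO.
Proof.
move=> n12 M1 M2 n1 n2 X1 X2.
have O1 : (val pO <= val L1)%MS by move: M1; rewrite /Mln (negbTE n1) orbF => /andP[].
have O2 : (val pO <= val L2)%MS by move: M2; rewrite /Mln (negbTE n2) orbF => /andP[].
apply/eqP/negPn/negP => nXO; move/negP: n12; apply; apply/eqP.
exact: (uniq_line nXO).
Qed.

Lemma fO : fp pO = pO.
Proof.
case: Ha => h1 h2 h3; case: Hb => g1 g2 g3; case: Hc => c12 c13 c23.
have M i : i \in [:: a1; a2; a3] -> Mln (fl (Ma i)).
  rewrite Mln_f; rewrite !inE => /or3P[] /eqP->; exact: Ma_marked.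
have On i : (val (fp pO) <= val (fl (Ma i)))%MS by rewrite finc OMa.
have N i j : i != j -> fl (Ma i) != fl (Ma j).
  by move=> H; apply: contra_neq (Ma_neq H); apply: fl_inj.
have I1 : in_mem a1 (mem [:: a1; a2; a3]) by rewrite !inE eqxx.
have I2 : in_mem a2 (mem [:: a1; a2; a3]) by rewrite !inE eqxx orbT.
have I3 : in_mem a3 (mem [:: a1; a2; a3]) by rewrite !inE eqxx !orbT.
case: (eqVneq (fl (Ma a1)) lI) => E1.
  have n23 : fl (Ma a2) != lI by rewrite -E1 N // eq_sym.
  have n33 : fl (Ma a3) != lI by rewrite -E1 N // eq_sym.
  exact: (two_marked (N _ _ c23) (M _ I2) (M _ I3) n23 n33 (On _) (On _)).
case: (eqVneq (fl (Ma a2)) lI) => E2.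
  have n33 : fl (Ma a3) != lI by rewrite -E2 N // eq_sym.
  exact: (two_marked (N _ _ c13) (M _ I1) (M _ I3) E1 n33 (On _) (On _)).
exact: (two_marked (N _ _ c12) (M _ I1) (M _ I2) E1 E2 (On _) (On _)).
Qed.

Lemma fI : fl lI = lI.
Proof.
have := Mln_f lI; rewrite {2}/Mln eqxx orbT /Mln.
rewrite -{1}fO finc (negbTE OnI) /=.
by move/eqP.
Qed.

Lemma LxI : lLx != lI. Proof. exact: (lneq OLx OnI). Qed.
Lemma BI : lB != lI. Proof. exact: (lneq OB OnI). Qed.
Lemma DI : lD != lI. Proof. exact: (lneq OD OnI). Qed.

Definition is3 (W : ln) := [|| W == lLx, W == lB | W == lD].

Lemma is3_unmarked W : is3 W -> Mln W = false.
Proof.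
case/or3P => /eqP->; rewrite /Mln eqxx /= ?andbF /= ?(negbTE LxI) ?(negbTE BI) ?(negbTE DI) //.
Qed.

Lemma f_is3 W : is3 W -> is3 (fl W).
Proof.
move=> H; have := Mln_f W; rewrite (is3_unmarked H) /Mln -{1}fO finc.
have OW : (val pO <= val W)%MS by case/or3P: H => /eqP->; rewrite ?OLx ?OB ?OD.
rewrite OW /= => /negbT; rewrite negb_or => /andP[H2 _].
by move: H2; rewrite /is3; case: (fl W == lLx); case: (fl W == lB); case: (fl W == lD).
Qed.


Definition Excl (W : ln) (X : pt) :=
  [&& (val X <= val W)%MS, X != pO, ~~ (val X <= val lI)%MS & ~~ Spt X].

Lemma excl_cases W X : is3 W -> Excl W X -> [\/ X = pX 1, X = pc1 | X = pE].
Proof.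
move=> HW /and4P[XW XO XI SX].
have H3 : (val X <= val lLx)%MS || (val X <= val lB)%MS || (val X <= val lD)%MS.
  by case/or3P: HW => /eqP E; rewrite -E XW ?orbT.
move: SX; rewrite /Spt H3 XO XI /=.
case: (eqVneq X (pX 1)) => [->|_]; first by constructor 1.
case: (eqVneq X pc1) => [->|_]; first by constructor 2.
by case: (eqVneq X pE) => [->|_] //; constructor 3.
Qed.

Lemma is3Lx : is3 lLx. Proof. by rewrite /is3 eqxx. Qed.
Lemma is3B : is3 lB. Proof. by rewrite /is3 eqxx orbT. Qed.
Lemma is3D : is3 lD. Proof. by rewrite /is3 eqxx !orbT. Qed.

Lemma excl_Lx X : ~~ Excl lLx X.
Proof.
apply/negP => H; have := H; case/and4P => XW _ _ _.
by case: (excl_cases is3Lx H) => E; move: XW; rewrite E ?(negbTE X1nLx) ?(negbTE c1nLx) ?(negbTE EnLx).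
Qed.
Lemma excl_B X : Excl lB X -> X = pX 1.
Proof.
move=> H; have := H; case/and4P => XW _ _ _.
by case: (excl_cases is3B H) => E //; move: XW; rewrite E ?(negbTE c1nB) ?(negbTE EnB).
Qed.
Lemma excl_D X : Excl lD X -> X = pc1 \/ X = pE.
Proof.
move=> H; have := H; case/and4P => XW _ _ _.
by case: (excl_cases is3D H) => E; [move: XW; rewrite E (negbTE X1nD) | left | right].
Qed.

Lemma fexcl W X : Excl W X -> Excl (fl W) (fp X).
Proof.
case/and4P => XW XO XI SX; apply/and4P; split.
- by rewrite finc.
- by rewrite -fO (inj_eq fp_inj).
- by rewrite -fI finc.
- by rewrite Spt_f.
Qed.

Lemma notSpt_X1 : ~~ Spt (pX 1). Proof. by rewrite /Spt eqxx !andbF. Qed.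
Lemma notSpt_c1 : ~~ Spt pc1. Proof. by rewrite /Spt eqxx !andbF. Qed.
Lemma notSpt_E : ~~ Spt pE. Proof. by rewrite /Spt eqxx !andbF. Qed.

Lemma exX1 : Excl lB (pX 1).
Proof. by rewrite /Excl X1B X1nI notSpt_X1 (pneq' OLx X1nLx). Qed.
Lemma exc1 : Excl lD pc1.
Proof. by rewrite /Excl c1D c1nI notSpt_c1 (pneq' OLx c1nLx). Qed.
Lemma exE : Excl lD pE.
Proof. by rewrite /Excl ED EnI notSpt_E (pneq' OLx EnLx). Qed.

Definition lXV := lnv (vec3 1 0 (-1)).
Lemma c1XV : (val pc1 <= val lXV)%MS. Proof. by yinc. Qed.
Lemma EnXV : ~~ (val pE <= val lXV)%MS. Proof. by ninc (w - 1). Qed.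
Lemma c1E : pc1 != pE. Proof. exact: (pneq c1XV EnXV). Qed.

Lemma fD : fl lD = lD.
Proof.
have e1 := fexcl exc1; have e2 := fexcl exE.
case/or3P: (f_is3 is3D) => /eqP FD.
- by move: (excl_Lx (fp pc1)); rewrite -FD e1.
- rewrite FD in e1 e2.
  have E1 := excl_B e1; have E2 := excl_B e2.
  have : fp pc1 = fp pE by rewrite E1 E2.
  move/fp_inj => E.
  by move: c1E; rewrite E eqxx.
- exact: FD.
Qed.

Lemma BD : lB != lD. Proof. exact: (lneq X1B X1nD). Qed.
Lemma VLx : (val pV <= val lLx)%MS. Proof. by yinc. Qed.
Lemma VI : (val pV <= val lI)%MS. Proof. by yinc. Qed.
Lemma VnB : ~~ (val pV <= val lB)%MS. Proof. by ninc (1:F). Qed.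
Lemma VnD : ~~ (val pV <= val lD)%MS. Proof. by ninc (-1:F). Qed.
Lemma UB : (val pU <= val lB)%MS. Proof. by yinc. Qed.
Lemma UI : (val pU <= val lI)%MS. Proof. by yinc. Qed.

Lemma fB : fl lB = lB.
Proof.
case/or3P: (f_is3 is3B) => /eqP FB.
- have e1 := fexcl exX1; rewrite FB in e1.
  by move: (excl_Lx (fp (pX 1))); rewrite e1.
- exact: FB.
- have : fl lB = fl lD by rewrite FB fD.
  by move/fl_inj => E; move: BD; rewrite E eqxx.
Qed.

Lemma fLx : fl lLx = lLx.
Proof.
case/or3P: (f_is3 is3Lx) => /eqP F1.
- exact: F1.
- have : fl lLx = fl lB by rewrite F1 fB.
  by move/fl_inj => E; move: (lneq VLx VnB); rewrite E eqxx.
- have : fl lLx = fl lD by rewrite F1 fD.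
  by move/fl_inj => E; move: (lneq VLx VnD); rewrite E eqxx.
Qed.

Lemma fX1 : fp (pX 1) = pX 1.
Proof. by have := fexcl exX1; rewrite fB => /excl_B. Qed.
Lemma fV : fp pV = pV.
Proof. exact: (fix_pt LxI fLx fI VLx VI). Qed.
Lemma fU : fp pU = pU.
Proof. exact: (fix_pt BI fB fI UB UI). Qed.

Lemma X1XV : (val (pX 1) <= val lXV)%MS. Proof. by yinc. Qed.
Lemma VXV : (val pV <= val lXV)%MS. Proof. by yinc. Qed.
Lemma fXV : fl lXV = lXV.
Proof. exact: (fix_line (pneq' VI X1nI) fX1 fV X1XV VXV). Qed.
Lemma fc1 : fp pc1 = pc1.
Proof. exact: (fix_pt (lneq X1XV X1nD) fXV fD c1XV c1D). Qed.
Lemma fE : fp pE = pE.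
Proof.
have := fexcl exE; rewrite fD => /excl_D [] // E.
have : fp pE = fp pc1 by rewrite E fc1.
by move/fp_inj => E2; move: c1E; rewrite E2 eqxx.
Qed.

Definition lH := lnv (vec3 0 1 (-1)).
Definition lVE := lnv (vec3 1 0 (-w)).
Lemma c1H : (val pc1 <= val lH)%MS. Proof. by yinc. Qed.
Lemma UH : (val pU <= val lH)%MS. Proof. by yinc. Qed.
Lemma VVE : (val pV <= val lVE)%MS. Proof. by yinc. Qed.
Lemma EVE : (val pE <= val lVE)%MS. Proof. by yinc. Qed.
Lemma c2H : (val pc2 <= val lH)%MS. Proof. by yinc. Qed.
Lemma c2VE : (val pc2 <= val lVE)%MS. Proof. by yinc. Qed.
Lemma UnVE : ~~ (val pU <= val lVE)%MS. Proof. by ninc (1:F). Qed.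
Lemma fH : fl lH = lH.
Proof. exact: (fix_line (pneq' UI c1nI) fc1 fU c1H UH). Qed.
Lemma fVE : fl lVE = lVE.
Proof. exact: (fix_line (pneq VI EnI) fV fE VVE EVE). Qed.
Lemma fc2 : fp pc2 = pc2.
Proof. exact: (fix_pt (lneq UH UnVE) fH fVE c2H c2VE). Qed.


Lemma vYnz t : vec3 0 t (t - 1) != 0.
Proof.
case: (eqVneq t 0) => [->|H]; last exact: vnz2.
by apply: vnz3; rewrite sub0r m1nz.
Qed.

Lemma XtB t : (val (pX t) <= val lB)%MS. Proof. by yinc. Qed.
Lemma c2nLx : ~~ (val pc2 <= val lLx)%MS. Proof. by ninc w. Qed.
Lemma c2nB : ~~ (val pc2 <= val lB)%MS. Proof. by ninc (1:F). Qed.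

Lemma chain_step t : fp (pX t) = pX t -> fp (pX (w * t)) = pX (w * t).
Proof.
move=> Ht.
pose Y := ptv (vec3 0 t (t - 1)).
pose M1 := lnv (vec3 1 (t - 1) (- t)).
pose M2 := lnv (vec3 (-1) (- (w * (t - 1))) (w * t)).
have nM1 : vec3 1 (t - 1) (- t) != 0 by apply: vnz1; rewrite oner_eq0.
have nM2 : vec3 (-1) (- (w * (t - 1))) (w * t) != 0 by apply: vnz1; rewrite m1nz.
have nY := vYnz t.
have c1M1 : (val pc1 <= val M1)%MS.
  by rewrite /M1 incv //; [apply/eqP; ring | apply: vnz1; rewrite oner_eq0].
have XM1 : (val (pX t) <= val M1)%MS.
  by rewrite /M1 incv //; [apply/eqP; ring | apply: vnz3; rewrite oner_eq0].
have fM1 : fl M1 = M1 by exact: (fix_line (pneq' (XtB t) c1nB) fc1 Ht c1M1 XM1).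
have YM1 : (val Y <= val M1)%MS by rewrite /Y /M1 incv //; apply/eqP; ring.
have YLx : (val Y <= val lLx)%MS.
  by rewrite /Y /lLx incv //; [apply/eqP; ring | apply: vnz1; rewrite oner_eq0].
have fY : fp Y = Y by exact: (fix_pt (lneq c1M1 c1nLx) fM1 fLx YM1 YLx).
have c2M2 : (val pc2 <= val M2)%MS.
  by rewrite /M2 incv //; [apply/eqP; ring | apply: vnz3; rewrite oner_eq0].
have YM2 : (val Y <= val M2)%MS by rewrite /Y /M2 incv //; apply/eqP; ring.
have fM2 : fl M2 = M2 by exact: (fix_line (pneq' YLx c2nLx) fc2 fY c2M2 YM2).
have XM2 : (val (pX (w * t)%R) <= val M2)%MS.
  by rewrite /M2 incv //; [apply/eqP; ring | apply: vnz3; rewrite oner_eq0].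
exact: (fix_pt (lneq c2M2 c2nB) fM2 fB XM2 (XtB _)).
Qed.

Lemma fXpow k : fp (pX (w ^+ k)) = pX (w ^+ k).
Proof. by elim: k => [|k IH]; [rewrite expr0; exact: fX1 | rewrite exprS; exact: chain_step]. Qed.

Lemma fX t : fp (pX t) = pX t.
Proof.
case: (eqVneq t 0) => [->|/Hgen [k ->]]; last exact: fXpow.
exact: fO.
Qed.


Lemma vec3_eta (v : 'rV[F]_3) : exists x y z, v = vec3 x y z.
Proof.
exists (v 0 0), (v 0 1), (v 0 (@Ordinal 3 2 isT)).
apply/rowP => i; rewrite !mxE; case: i => [[|[|[|i]]] Hi] //=;
  by congr (v _ _); apply: val_inj.
Qed.

Lemma ptv_sc k a b c : k != 0 -> vec3 a b c != 0 ->
  ptv (vec3 (k * a) (k * b) (k * c)) = ptv (vec3 a b c).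
Proof. by move=> Hk Hv; rewrite -vec3_scale ptv_scale. Qed.

Lemma fBall x z : vec3 x 0 z != 0 -> fp (ptv (vec3 x 0 z)) = ptv (vec3 x 0 z).
Proof.
move=> Hv; case: (eqVneq z 0) => [Ez|Hz].
  have Hx : x != 0 by move: Hv; rewrite Ez vec3_eq0 !eqxx !andbT.
  have -> : ptv (vec3 x 0 z) = pU.
    rewrite Ez /pU -(ptv_sc (k := x) (a := 1) (b := 0) (c := 0)) ?mulr1 ?mulr0 //; nzt.
  exact: fU.
have -> : ptv (vec3 x 0 z) = pX (x / z).
  rewrite /pX -(ptv_sc (k := z) (a := x / z) (b := 0) (c := 1)) //; last by nzt.
  by rewrite mulr0 mulr1 mulrC divfK.
exact: fX.
Qed.

Lemma fLxall y z : vec3 0 y z != 0 -> fp (ptv (vec3 0 y z)) = ptv (vec3 0 y z).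
Proof.
move=> Hv; case: (eqVneq y 0) => [Ey|Hy].
  have Hz : z != 0 by move: Hv; rewrite Ey vec3_eq0 !eqxx.
  have -> : ptv (vec3 0 y z) = pO.
    rewrite Ey /pO -(ptv_sc (k := z) (a := 0) (b := 0) (c := 1)) ?mulr1 ?mulr0 //; nzt.
  exact: fO.
pose Q := ptv (vec3 (- y) 0 (z - y)).
pose N := lnv (vec3 (z - y) (- z) y).
have nQ : vec3 (- y) 0 (z - y) != 0 by apply: vnz1; rewrite oppr_eq0.
have nN : vec3 (z - y) (- z) y != 0 by apply: vnz3.
have fQ : fp Q = Q := fBall nQ.
have c1N : (val pc1 <= val N)%MS.
  by rewrite /N incv //; [apply/eqP; ring | nzt].
have QN : (val Q <= val N)%MS by rewrite /N /Q incv //; apply/eqP; ring.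
have QB : (val Q <= val lB)%MS by rewrite /Q /lB incv //; [apply/eqP; ring | nzt].
have fN : fl N = N by exact: (fix_line (pneq' QB c1nB) fc1 fQ c1N QN).
have PN : (val (ptv (vec3 0 y z)) <= val N)%MS by rewrite /N incv //; apply/eqP; ring.
have PLx : (val (ptv (vec3 0 y z)) <= val lLx)%MS by rewrite /lLx incv //; [apply/eqP; ring | nzt].
exact: (fix_pt (lneq c1N c1nLx) fN fLx PN PLx).
Qed.

Lemma fz1 a b : fp (ptv (vec3 a b 1)) = ptv (vec3 a b 1).
Proof.
case: (eqVneq b 0) => [->|Hb0]; first by apply: fBall; nzt.
case: (eqVneq a 0) => [->|Ha0]; first by apply: fLxall; nzt.
pose N1 := lnv (vec3 0 1 (- b)).
pose N2 := lnv (vec3 1 0 (- a)).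
have UN1 : (val pU <= val N1)%MS by rewrite /N1; yinc.
have QN1 : (val (ptv (vec3 0 b 1)) <= val N1)%MS by rewrite /N1; yinc.
have PN1 : (val (ptv (vec3 a b 1)) <= val N1)%MS by rewrite /N1; yinc.
have VN2 : (val pV <= val N2)%MS by rewrite /N2; yinc.
have XN2 : (val (pX a) <= val N2)%MS by rewrite /N2 /pX; yinc.
have PN2 : (val (ptv (vec3 a b 1)) <= val N2)%MS by rewrite /N2; yinc.
have QnI : ~~ (val (ptv (vec3 0 b 1)) <= val lI)%MS by ninc (1:F).
have XnI : ~~ (val (pX a) <= val lI)%MS by rewrite /pX; ninc (1:F).
have UnN2 : ~~ (val pU <= val N2)%MS by rewrite /N2; ninc (1:F).
have fN1 : fl N1 = N1.
  by apply: (fix_line (pneq' UI QnI) _ fU QN1 UN1); apply: fLxall; nzt.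
have fN2 : fl N2 = N2.
  by apply: (fix_line (pneq' VI XnI) (fX a) fV XN2 VN2).
exact: (fix_pt (lneq UN1 UnN2) fN1 fN2 PN1 PN2).
Qed.

Lemma fall (p : pt) : fp p = p.
Proof.
have [v nv ->] := pt_vec p.
have [x [y [z Ev]]] := vec3_eta v; rewrite Ev in nv *.
case: (eqVneq z 0) => [Ez|Hz].
  rewrite Ez in nv *.
  case: (eqVneq y 0) => [Ey|Hy]; first by rewrite Ey in nv *; apply: fBall.
  case: (eqVneq x 0) => [Ex|Hx]; first by rewrite Ex in nv *; apply: fLxall.
  pose Q := ptv (vec3 x y 1).
  pose N := lnv (vec3 y (- x) 0).
  have fQ : fp Q = Q := fz1 x y.
  have ON : (val pO <= val N)%MS by rewrite /N; inc; [apply/eqP; ring].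
  have QN : (val Q <= val N)%MS by rewrite /N /Q; inc; [apply/eqP; ring].
  have PN : (val (ptv (vec3 x y 0)) <= val N)%MS by rewrite /N incv //; [apply/eqP; ring | nzt].
  have PI : (val (ptv (vec3 x y 0)) <= val lI)%MS by rewrite /lI incv //; [apply/eqP; ring | nzt].
  have QnLx : ~~ (val Q <= val lLx)%MS by rewrite /Q; ninc x.
  have fN : fl N = N by exact: (fix_line (pneq OLx QnLx) fO fQ ON QN).
  exact: (fix_pt (lneq ON OnI) fN fI PN PI).
rewrite -(ptv_sc (k := z^-1)) //; last by rewrite invr_eq0.
by rewrite mulVf // fz1.
Qed.

Lemma flall (L : ln) : fl L = L.
Proof.
have [p [q [npq pL qL]]] := ln_two_pts L.
exact: (fix_line npq (fall p) (fall q) pL qL).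
Qed.

Lemma f_id : f = 1%g.
Proof.
apply/permP => x; rewrite perm1; case: x => [p|L].
  by rewrite fpE fall.
by rewrite flE flall.
Qed.

End Dist.
End Col.

Section Aux.
Local Open Scope ring_scope.
Variable F : finFieldType.

Lemma three_elts : (5 <= #|F|)%N -> exists a1 a2 a3 : F,
  [/\ [/\ a1 != 0, a2 != 0 & a3 != 0], [/\ a1 != 1, a2 != 1 & a3 != 1]
    & [/\ a1 != a2, a1 != a3 & a2 != a3]].
Proof.
move=> hq.
pose A := ~: [set (0 : F); 1].
have cA : (3 <= #|A|)%N.
  have := cardsC [set (0 : F); 1]; rewrite cards2 eq_sym oner_eq0 => E.
  by rewrite -(leq_add2l 2) E.
have [x1 Hx1] : exists x, x \in A by apply/card_gt0P; apply: leq_trans cA.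
have c1 : (2 <= #|A :\ x1|)%N by move: cA; rewrite (cardsD1 x1) Hx1.
have [x2 Hx2] : exists x, x \in A :\ x1 by apply/card_gt0P; apply: leq_trans c1.
have c2 : (1 <= #|A :\ x1 :\ x2|)%N by move: c1; rewrite (cardsD1 x2) Hx2.
have [x3 Hx3] : exists x, x \in A :\ x1 :\ x2 by apply/card_gt0P.
move: Hx1 Hx2 Hx3; rewrite !inE !negb_or => /andP[n10 n11] /and3P[n21 n20 n22] /and4P[n32 n31 n30 n33].
exists x1, x2, x3; split; split => //; by rewrite eq_sym.
Qed.

Lemma I2_eq (a b c : 'I_2) : a != c -> b != c -> a = b.
Proof.
by case: a => [[|[|?]] ?]; case: b => [[|[|?]] ?]; case: c => [[|[|?]] ?] //=;
  move=> H1 H2; apply: val_inj.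
Qed.

Definition Mg : 'M[F]_3 := perm_mx (tperm (0 : 'I_3) 1).
Lemma Mg_free : row_free Mg.
Proof. by rewrite row_free_unit unitmx_perm. Qed.

Definition gp (p : pg_point F) : pg_point F := insubd p (<<val p *m Mg>>)%MS.
Definition gl (L : pg_line F) : pg_line F := insubd L (<<val L *m Mg>>)%MS.

Lemma val_gp p : val (gp p) = (<<val p *m Mg>>)%MS.
Proof. by rewrite val_insubd genmx_id eqxx genmxE mxrankMfree ?Mg_free // ptR. Qed.
Lemma val_gl L : val (gl L) = (<<val L *m Mg>>)%MS.
Proof. by rewrite val_insubd genmx_id eqxx genmxE mxrankMfree ?Mg_free // lnR. Qed.

Lemma g_inc p L : (val (gp p) <= val (gl L))%MS = (val p <= val L)%MS.
Proof. by rewrite val_gp val_gl !genmxE submxMfree // Mg_free. Qed.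

Lemma gp_inj : injective gp.
Proof.
move=> p q E; apply: pt_eqmx; have := congr1 val E; rewrite !val_gp => /genmxP.
by rewrite /eqmx !submxMfree ?Mg_free.
Qed.
Lemma gl_inj : injective gl.
Proof.
move=> p q E; apply: ln_eqmx; have := congr1 val E; rewrite !val_gl => /genmxP.
by rewrite /eqmx !submxMfree ?Mg_free.
Qed.

Definition gv (x : LG_vertex F) : LG_vertex F :=
  match x with inl p => inl (gp p) | inr L => inr (gl L) end.
Lemma gv_inj : injective gv.
Proof.
by move=> [p|L] [q|M] //= [] E; congr (_ _); [apply: gp_inj | apply: gl_inj].
Qed.
Definition g := perm gv_inj.

Lemma g_aut : graph_aut (@LG_adj F) g.
Proof. by move=> [p|L] [q|M]; rewrite !permE //= g_inc. Qed.

Lemma vMg a b c : vec3 a b c *m Mg = vec3 b a c.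
Proof.
rewrite /Mg -[tperm _ _]tpermV -col_permE; apply/rowP => j; rewrite !mxE.
by case: j => [[|[|[|j]]] Hj] //=; rewrite permE /=.
Qed.

Lemma g_nontriv : g != 1%g.
Proof.
apply/eqP => /(congr1 (fun h : {perm _} => h (inl (pU F)))); rewrite perm1 permE /=.
move=> [] /(congr1 val); rewrite val_gp /pU val_ptv ?v100 //.
rewrite (eq_genmx (eqmxMr _ (genmxE _))) vMg => E.
have : pV F = pU F.
  by apply: val_inj; rewrite /pV /pU !val_ptv ?v100 //; apply: vnz2; rewrite oner_eq0.
by move/eqP; apply/negP; apply: (pneq' (UB F) (VnB F)).
Qed.

End Aux.

Section Low.
Local Open Scope ring_scope.
Variable F : finFieldType.

Lemma adjOB : @LG_adj F (inl (pO F)) (inr (lB F)).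
Proof. by rewrite /= OB. Qed.

Lemma no_col_lt3 m : (m < 3)%N -> ~ has_proper_dist_coloring (@LG_adj F) m.
Proof.
move=> Hm [c [Hp Hd]].
case: m c Hp Hd Hm => [|[|[|m]]] c Hp Hd Hm //.
- by case: (c (inl (pO F))).
- by have := Hp _ _ adjOB; rewrite (ord1 (c _)) (ord1 (c (inr _))) eqxx.
- have Hg : forall x, c (g F x) = c x.
    move=> [p|L]; rewrite permE /=.
    + have [L /andP[pL gL]] := join_ex p (gp p).
      apply: (@I2_eq _ _ (c (inr L))); apply: Hp; by rewrite /= ?pL ?gL.
    + have [p /andP[pL gL]] := meet_ex L (gl L).
      apply: (@I2_eq _ _ (c (inl p))); apply: Hp; by rewrite /= ?pL ?gL.
  by move: (g_nontriv F); rewrite (Hd _ (@g_aut F) Hg) eqxx.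
Qed.
End Low.

Theorem mainTheorem2 (F : finFieldType) (hq : (5 <= #|F|)%N) :
  chiD_eq (@LG_adj F) 3.
Proof.
have [a1 [a2 [a3 [Ha Hb Hc]]]] := three_elts hq.
have [w Hgen] := gen_exists F.
have [h1 _ _] := Ha; have [g1 _ _] := Hb.
have [k Ek] := Hgen _ h1.
have Hw0 : (w != 0)%R.
  apply/negP => /eqP Ew; move: Ek; rewrite Ew expr0n.
  by case: (k == 0)%N => /= E; [move: g1 | move: h1]; rewrite E eqxx.
have Hw1 : (w != 1)%R.
  by apply/negP => /eqP Ew; move: Ek; rewrite Ew expr1n => E; move: g1; rewrite E eqxx.
split.
  exists (col w); split; first exact: col_proper.
  by move=> f Haut Hcol; exact: (f_id Hw0 Hw1 Ha Hb Hc Hgen Haut Hcol).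
move=> m Hm; rewrite leqNgt; apply/negP => Hlt.
exact: (no_col_lt3 Hlt Hm).
Qed.
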